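(* Let $L$ be an infinite set and consider the edged cube $\bar Q_L$. A basic sequence is convergent over $f_{\mathrm{solved}}$ if and only if it is universally convergent; consequently the set of basic sequences convergent over $f_{\mathrm{solved}}$, taken modulo $\sim$, is exactly the group $\mathrm{UC}_L=\mathrm{uc}_L/{\sim}$ under the operation induced by concatenation. In particular, let $k=\operatorname{lcm}\{\text{order of }\pi:\pi\in S_{24}\}$; if $f$ is the (legal) terminal configuration obtained by applying a basic sequence of length $\theta$ to $f_{\mathrm{solved}}$, then there is a basic sequence of length at most $\theta\cdot(k-1)$ (ordinal product) which, applied to $f$, has terminal configuration $f_{\mathrm{solved}}$.
   Context: Let $L$ be an infinite set, $-L=\{-r:r\in L\}$ a disjoint copy of $L$, and $0$ a new element; $L^\dagger=-L\cup\{0\}\cup L$ with $-(-r)=r$, $-0=0$. Adjoin $\pm\infty$ with $-(+\infty)=-\infty$ and set $\bar L^\dagger=L^\dagger\cup\{\pm\infty\}$. Points of $U=(\bar L^\dagger)^3$ have coordinates $x,y,z$. The edged cube $\bar Q_L$ is the set of cells $(p,i)$ with $p\in U$, $i\in\{x,y,z\}$, $p_i\in\{\pm\infty\}$ ($i$ marks the face of the cell). For $i\in\{x,y,z\}$, $\alpha\in\bar L^\dagger$, the quarter-turn twist $T_{i,\alpha}$ is the permutation of cells fixing every cell whose point $p$ has $p_i\ne\alpha$ and acting on the others by the rotation $T_{x,\alpha}(\alpha,y,z)=(\alpha,-z,y)$, $T_{y,\alpha}(x,\alpha,z)=(z,\alpha,-x)$, $T_{z,\alpha}(x,y,\alpha)=(-y,x,\alpha)$,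 the marked coordinate being carried along by the rotation. Basic twists are $T,T^2,T^3$ for quarter-turn twists $T$. A basic sequence is a sequence $\langle\sigma_\eta:\eta<\theta\rangle$ of basic twists of ordinal length $\theta$. A labelling is a map $f$ from cells to $X\cup\{\mathrm{NaC}\}$ for a set $X\not\ni\mathrm{NaC}$; it is legal if it never takes value NaC; a configuration is a labelling with $X$ the six colors red, white, green, orange, yellow, blue. The solved configuration $f_{\mathrm{solved}}$ colors cell $(p,i)$ red, blue, white, orange, green, yellow according as $p_i=+\infty$ with $i=x,y,z$, or $p_i=-\infty$ with $i=x,y,z$, respectively. A twist $\sigma$ acts by $(\sigma f)(c)=f(\sigma^{-1}c)$. Applying $\langle\sigma_\eta:\eta<\theta\rangle$ to $f_0$ produces $f_{\eta+1}=\sigma_\eta f_\eta$, and for limit $\lambda\le\theta$, $f_\lambda(c)$ is the eventually constant value of $f_\eta(c)$ ($\eta<\lambda$) if it exists and NaC otherwise; $f_\theta$ is the terminal labelling. The sequence is convergent over $f_0$ if $f_\theta$ is legal, and universally convergent if it is convergent over the identity labelling (each cell labelled by itself). $\vec\sigma\sim\vec\tau$ iff they give the same terminal configuration from every configuration. $\mathrm{uc}_L$ is the set of universally convergent basic sequences under concatenation ($\vec\tau\vec\sigma$ means $\vec\sigma$ then $\vec\tau$), and $\mathrm{UC}_L=\mathrm{uc}_L/{\sim}$. *)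

(* Defs.v *)
From Stdlib Require Import ClassicalEpsilon.
From Stdlib Require List.
From mathcomp Require Import all_boot fingroup perm.

Set Implicit Arguments.
Unset Strict Implicit.
Unset Printing Implicit Defensive.

Definition infinite_type (L : Type) : Prop :=
  forall s : list L, exists x : L, ~ List.In x s.

Section Cube.
Variable L : Type.

(* \bar L^dagger = -L u {0} u L u {+oo,-oo} *)
Inductive coord : Type := Pos of L | Neg of L | Zero | PInf | NInf.

Definition cneg (a : coord) : coord :=
  match a with
  | Pos r => Neg r | Neg r => Pos r | Zero => Zero | PInf => NInf | NInf => PInf
  end.

Record pt : Type := Pt { px : coord; py : coord; pz : coord }.

Inductive axis : Type := AX | AY | AZ.

Definition get (p : pt) (i : axis) : coord :=
  match i with AX => px p | AY => py p | AZ => pz p end.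

Definition is_inf (a : coord) : Prop := a = PInf \/ a = NInf.

Record cell : Type := Cell { cpt : pt; cax : axis; cinf : is_inf (get cpt cax) }.

Definition rot (i : axis) (p : pt) : pt :=
  match i with
  | AX => Pt (px p) (cneg (pz p)) (py p)
  | AY => Pt (pz p) (py p) (cneg (px p))
  | AZ => Pt (cneg (py p)) (px p) (pz p)
  end.

(* where the rotation about axis i carries the marked coordinate j *)
Definition swap (i j : axis) : axis :=
  match i, j with
  | AX, AY => AZ | AX, AZ => AY
  | AY, AX => AZ | AY, AZ => AX
  | AZ, AX => AY | AZ, AY => AX
  | _, _ => j
  end.

Definition dec (P : Prop) : {P} + {~ P} := excluded_middle_informative P.

Definition qt_pt (i : axis) (a : coord) (p : pt) : pt :=
  if dec (get p i = a) then rot i p else p.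

Definition qt_ax (i : axis) (a : coord) (p : pt) (j : axis) : axis :=
  if dec (get p i = a) then swap i j else j.

Lemma cneg_inf (a : coord) : is_inf a -> is_inf (cneg a).
Proof. by case=> ->; [right|left]. Qed.

Lemma qt_inf (i : axis) (a : coord) (p : pt) (j : axis) :
  is_inf (get p j) -> is_inf (get (qt_pt i a p) (qt_ax i a p j)).
Proof.
rewrite /qt_pt /qt_ax => H; destruct (dec (get p i = a)) as [e|e]; rewrite /=; last by [].
clear e; destruct i, j; simpl in *; try apply: cneg_inf; exact H.
Qed.

Definition qt_cell (i : axis) (a : coord) (c : cell) : cell :=
  @Cell (qt_pt i a (cpt c)) (qt_ax i a (cpt c) (cax c)) (qt_inf i a (cinf c)).

Inductive pow : Type := Q1 | Q2 | Q3.
Definition pow_nat (m : pow) : nat := match m with Q1 => 1 | Q2 => 2 | Q3 => 3 end.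

Record btwist : Type := BT { bt_axis : axis; bt_pos : coord; bt_pow : pow }.

(* labellings: cells -> X u {NaC}, NaC represented by None *)
Definition labelling (X : Type) := cell -> option X.

(* (sigma f)(c) = f(sigma^{-1} c), with sigma = T^m, so sigma^{-1} = T^(4-m) *)
Definition act (X : Type) (s : btwist) (f : labelling X) : labelling X :=
  fun c => f (iter (4 - pow_nat (bt_pow s)) (qt_cell (bt_axis s) (bt_pos s)) c).

Definition legal (X : Type) (f : labelling X) : Prop := forall c, f c <> None.

Inductive color : Type := red | white | green | orange | yellow | blue.

Definition solved (c : cell) : color :=
  match cax c, get (cpt c) (cax c) with
  | AX, PInf => red   | AY, PInf => blue  | AZ, PInf => white
  | AX, _    => orange | AY, _   => green | AZ, _    => yellow
  end.

End Cube.

(* Ordinal lengths are represented by (strictly) well-ordered types. *)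
Record wotype : Type := WO {
  wo_car :> Type;
  wo_lt : wo_car -> wo_car -> Prop;
  wo_trans : forall a b c, wo_lt a b -> wo_lt b c -> wo_lt a c;
  wo_total : forall a b, wo_lt a b \/ a = b \/ wo_lt b a;
  wo_wf : well_founded wo_lt }.

Section Runs.
Variables (L : Type) (W : wotype) (X : Type).
Variable sq : W -> btwist L.  (* a basic sequence of length (order type of) W *)

(* stages eta <= theta : Some w for w in W, None for theta itself *)
Definition stage_lt (s t : option W) : Prop :=
  match s, t with
  | Some a, Some b => wo_lt a b
  | Some _, None => True
  | None, _ => False
  end.

Definition evconst (F : option W -> labelling L X) (s : option W) (c : cell L)
    (x : option X) : Prop :=
  exists w, stage_lt (Some w) s /\
    forall v, stage_lt (Some v) s -> ~ wo_lt v w -> F (Some v) c = x.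

Definition IsRun (f0 : labelling L X) (F : option W -> labelling L X) : Prop :=
  forall s : option W,
    (* s = 0 *)
    ((forall w, ~ stage_lt (Some w) s) -> F s = f0) /\
    (* s = w + 1 *)
    (forall w, stage_lt (Some w) s ->
       (forall v, stage_lt (Some v) s -> ~ wo_lt w v) ->
       F s = act (sq w) (F (Some w))) /\
    (* s a limit *)
    ((exists w, stage_lt (Some w) s) ->
     (forall w, stage_lt (Some w) s -> exists v, stage_lt (Some v) s /\ wo_lt w v) ->
     forall c, (forall x, evconst F s c x -> F s c = x) /\
               ((forall x, ~ evconst F s c x) -> F s c = None)).

Definition reaches (f0 g : labelling L X) : Prop :=
  exists F, IsRun f0 F /\ F None = g.

Definition convergent (f0 : labelling L X) : Prop :=
  exists F, IsRun f0 F /\ legal (F None).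

End Runs.

Definition univ_convergent (L : Type) (W : wotype) (sq : W -> btwist L) : Prop :=
  convergent sq (fun c : cell L => Some c).

Definition solved_lab (L : Type) : labelling L color := fun c => Some (solved c).

Definition kS24 : nat := \big[lcmn/1%N]_(s : 'S_24) #[s]%g.

(* order type of W' <= theta * n (ordinal product: n copies of theta, i.e.
   lexicographic order on {0..n-1} x W with the first coordinate major) *)
Definition len_le_mul (W' W : wotype) (n : nat) : Prop :=
  exists g : W' -> nat * W,
    (forall a, (g a).1 < n) /\
    (forall a b, wo_lt a b ->
       (g a).1 < (g b).1 \/ ((g a).1 = (g b).1 /\ wo_lt (g a).2 (g b).2)).

(* Main.v *)
Require Import Defs.
From mathcomp Require Import all_boot fingroup perm.
From Stdlib Require Import ProofIrrelevance ClassicalEpsilon FunctionalExtensionality Classical Lia.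
From Stdlib Require List.

Set Implicit Arguments.
Unset Strict Implicit.
Set Warnings "-notation-overridden".


Section Basics.
Variable L : Type.

Lemma cell_ext (c d : cell L) : cpt c = cpt d -> cax c = cax d -> c = d.
Proof.
case: c => p i H; case: d => q j H' /= E1 E2; subst.
by rewrite (proof_irrelevance _ H H').
Qed.

Lemma cnegK (a : coord L) : cneg (cneg a) = a.
Proof. by case: a. Qed.

Definition sgnc (b : bool) (a : coord L) := if b then cneg a else a.

Lemma sgnc_xor s t a : sgnc (xorb s t) a = sgnc s (sgnc t a).
Proof. by case: s; case: t => //=; rewrite cnegK. Qed.

End Basics.

Record rt := RT { rx : axis * bool; ry : axis * bool; rz : axis * bool }.
Definition rget (h : rt) (k : axis) := match k with AX => rx h | AY => ry h | AZ => rz h end.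
Definition aeqb (a b : axis) : bool :=
  match a, b with AX, AX | AY, AY | AZ, AZ => true | _, _ => false end.
Lemma aeqbP a b : reflect (a = b) (aeqb a b).
Proof. by case: a; case: b; constructor. Qed.

Definition rapp L (h : rt) (P : pt L) : pt L :=
  Pt (sgnc (rx h).2 (get P (rx h).1)) (sgnc (ry h).2 (get P (ry h).1))
     (sgnc (rz h).2 (get P (rz h).1)).
Lemma get_rapp L h (P : pt L) k : get (rapp h P) k = sgnc (rget h k).2 (get P (rget h k).1).
Proof. by case: k. Qed.

Definition rfwd (h : rt) (j : axis) : axis :=
  if aeqb (rx h).1 j then AX else if aeqb (ry h).1 j then AY else AZ.

Definition rcmp (h : rt) (p : axis * bool) : axis * bool :=
  let (a, s) := p in let (b, t) := rget h a in (b, xorb s t).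
Definition rcomp (g h : rt) : rt := RT (rcmp h (rx g)) (rcmp h (ry g)) (rcmp h (rz g)).

Lemma rapp_comp L g h (P : pt L) : rapp (rcomp g h) P = rapp g (rapp h P).
Proof.
case: g => [[a1 s1] [a2 s2] [a3 s3]].
rewrite /rapp /rcomp /= !get_rapp.
by case: (rget h a1) => b1 t1; case: (rget h a2) => b2 t2; case: (rget h a3) => b3 t3;
  rewrite /= !sgnc_xor.
Qed.

Definition rid := RT (AX, false) (AY, false) (AZ, false).
Lemma rapp_id L (P : pt L) : rapp rid P = P.
Proof. by case: P. Qed.
Lemma rfwd_id j : rfwd rid j = j.
Proof. by case: j. Qed.

Definition Rg (i : axis) : rt :=
  match i with
  | AX => RT (AX, false) (AZ, true) (AY, false)
  | AY => RT (AZ, false) (AY, false) (AX, true)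
  | AZ => RT (AY, true) (AX, false) (AZ, false)
  end.
Lemma rot_rapp L i (p : pt L) : Defs.rot i p = rapp (Rg i) p.
Proof. by case: i; case: p. Qed.
Lemma swap_rfwd i j : swap i j = rfwd (Rg i) j.
Proof. by case: i; case: j. Qed.

Definition all_ab : list (axis * bool) :=
  [:: (AX, false); (AX, true); (AY, false); (AY, true); (AZ, false); (AZ, true)].
Definition all_rt : list rt :=
  List.flat_map (fun a => List.flat_map (fun b => List.map (fun c => RT a b c) all_ab) all_ab) all_ab.
Definition even3 (a b c : axis) : bool :=
  match a, b, c with AX, AY, AZ | AY, AZ, AX | AZ, AX, AY => true | _, _, _ => false end.
Definition odd3 (a b c : axis) : bool :=
  match a, b, c with AX, AZ, AY | AY, AX, AZ | AZ, AY, AX => true | _, _, _ => false end.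
Definition validb (h : rt) : bool :=
  let: RT (a, s) (b, t) (c, u) := h in
  (even3 a b c && ~~ xorb s (xorb t u)) || (odd3 a b c && xorb s (xorb t u)).
Definition rot_list := List.filter validb all_rt.

Definition abeqb (p q : axis * bool) := aeqb p.1 q.1 && (p.2 == q.2).
Definition rteqb (g h : rt) := abeqb (rx g) (rx h) && abeqb (ry g) (ry h) && abeqb (rz g) (rz h).
Lemma rteqbP g h : reflect (g = h) (rteqb g h).
Proof.
apply: (iffP idP).
  case: g => [[a1 s1] [a2 s2] [a3 s3]]; case: h => [[b1 t1] [b2 t2] [b3 t3]].
  rewrite /rteqb /abeqb /= => /andP [] /andP [] /andP [] /aeqbP -> /eqP ->
    /andP [] /aeqbP -> /eqP -> /andP [] /aeqbP -> /eqP ->; done.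
move=> ->; case: h => [[b1 t1] [b2 t2] [b3 t3]].
by rewrite /rteqb /abeqb /=; case: b1; case: b2; case: b3; rewrite !eqxx.
Qed.
Definition inrt (h : rt) (l : list rt) := List.existsb (rteqb h) l.
Lemma inrtP h l : inrt h l -> List.In h l.
Proof.
elim: l => //= a l IH /orP [/rteqbP ->|/IH]; by [left|right].
Qed.
Lemma inrtP' h l : List.In h l -> inrt h l.
Proof.
elim: l => //= a l IH [->|/IH ->]; last by rewrite orbT.
by apply/orP; left; apply/rteqbP.
Qed.

Lemma rot_list_len : length rot_list = 24.
Proof. by vm_compute. Qed.

Lemma Rg_in i : List.In (Rg i) rot_list.
Proof. apply: inrtP; by case: i; vm_compute. Qed.
Lemma rid_in : List.In rid rot_list.
Proof. apply: inrtP; by vm_compute. Qed.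

Definition chk_comp := List.forallb (fun g => List.forallb (fun h =>
  inrt (rcomp g h) rot_list &&
  List.forallb (fun j => aeqb (rfwd (rcomp g h) j) (rfwd g (rfwd h j))) [:: AX; AY; AZ])
  rot_list) rot_list.
Lemma chk_comp_ok : chk_comp = true. Proof. by vm_compute. Qed.

Lemma forallb_In A (f : A -> bool) l x : List.forallb f l = true -> List.In x l -> f x = true.
Proof. move/List.forallb_forall; by apply. Qed.

Lemma rcomp_in g h : List.In g rot_list -> List.In h rot_list -> List.In (rcomp g h) rot_list.
Proof.
move=> Hg Hh; have /andP [H _] := forallb_In (forallb_In chk_comp_ok Hg) Hh.
exact: inrtP.
Qed.
Lemma rfwd_comp g h j : List.In g rot_list -> List.In h rot_list ->
  rfwd (rcomp g h) j = rfwd g (rfwd h j).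
Proof.
move=> Hg Hh; have /andP [_ H] := forallb_In (forallb_In chk_comp_ok Hg) Hh.
apply/aeqbP; apply: (forallb_In H); clear; by case: j; simpl; tauto.
Qed.

Definition chk_back := List.forallb (fun h =>
  List.forallb (fun j => aeqb (rget h (rfwd h j)).1 j) [:: AX; AY; AZ]) rot_list.
Lemma chk_back_ok : chk_back = true. Proof. by vm_compute. Qed.
Lemma rget_fwd h j : List.In h rot_list -> (rget h (rfwd h j)).1 = j.
Proof.
move=> Hh; apply/aeqbP; apply: (forallb_In (forallb_In chk_back_ok Hh)); clear; by case: j; simpl; tauto.
Qed.

Definition colsig (h : rt) (j : axis) := (rfwd h j, (rget h (rfwd h j)).2).
Definition chk_key := List.forallb (fun h1 => List.forallb (fun h2 =>
  List.forallb (fun j => List.forallb (fun m =>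
    aeqb j m || ~~ (abeqb (colsig h1 j) (colsig h2 j) && abeqb (colsig h1 m) (colsig h2 m))
    || rteqb h1 h2) [:: AX; AY; AZ]) [:: AX; AY; AZ]) rot_list) rot_list.
Lemma chk_key_ok : chk_key = true. Proof. by vm_compute. Qed.
Lemma key_rot h1 h2 j m : List.In h1 rot_list -> List.In h2 rot_list -> j <> m ->
  colsig h1 j = colsig h2 j -> colsig h1 m = colsig h2 m -> h1 = h2.
Proof.
move=> H1 H2 Hjm E1 E2.
have Hj : List.In j [:: AX; AY; AZ] by clear; case: j; simpl; tauto.
have Hm : List.In m [:: AX; AY; AZ] by clear; case: m; simpl; tauto.
have := forallb_In (forallb_In (forallb_In (forallb_In chk_key_ok H1) H2) Hj) Hm.
have Hab : forall p, abeqb p p by case=> [[] []]; rewrite /abeqb /= eqxx.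
rewrite E1 E2 !Hab /=.
case: (aeqbP j m) => // _ /rteqbP //.
Qed.

Section Qt.
Variable L : Type.
Implicit Types (c : cell L) (P : pt L) (a : coord L).

Lemma get_rot i P : get (Defs.rot i P) i = get P i.
Proof. by case: i; case: P. Qed.

Lemma qt_aff i a c : get (cpt c) i = a ->
  cpt (qt_cell i a c) = Defs.rot i (cpt c) /\ cax (qt_cell i a c) = swap i (cax c).
Proof.
move=> H; rewrite /qt_cell /= /qt_pt /qt_ax.
by case: (dec (get (cpt c) i = a)).
Qed.

Lemma qt_unaff i a c : get (cpt c) i <> a -> qt_cell i a c = c.
Proof.
move=> H; apply: cell_ext; rewrite /qt_cell /= /qt_pt /qt_ax;
by case: (dec (get (cpt c) i = a)).
Qed.

Lemma iter_unaff i a c m : get (cpt c) i <> a -> iter m (qt_cell i a) c = c.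
Proof. move=> H; elim: m => //= m ->; exact: qt_unaff. Qed.

Lemma iter_aff i a c m : get (cpt c) i = a ->
  cpt (iter m (qt_cell i a) c) = iter m (Defs.rot i) (cpt c) /\
  cax (iter m (qt_cell i a) c) = iter m (swap i) (cax c).
Proof.
move=> H; elim: m => [//|m [E1 E2]]; rewrite !iterS.
have H' : get (cpt (iter m (qt_cell i a) c)) i = a.
  rewrite E1; elim: m {E1 E2} => [//|m IH]; rewrite iterS get_rot //.
by rewrite (proj1 (qt_aff H')) (proj2 (qt_aff H')) E1 E2.
Qed.

Fixpoint rpow (g : rt) (m : nat) : rt := match m with 0 => rid | S m => rcomp g (rpow g m) end.

Lemma rpow_in g m : List.In g rot_list -> List.In (rpow g m) rot_list.
Proof. move=> H; elim: m => /= [|m IH]; [exact: rid_in | exact: rcomp_in]. Qed.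

Lemma iter_rot i m P : iter m (Defs.rot i) P = rapp (rpow (Rg i) m) P.
Proof. elim: m => /= [|m ->]; by rewrite ?rapp_id // rapp_comp rot_rapp. Qed.

Lemma iter_swap i m j : iter m (swap i) j = rfwd (rpow (Rg i) m) j.
Proof.
elim: m => /= [|m ->]; first by rewrite rfwd_id.
by rewrite rfwd_comp ?swap_rfwd //; [exact: Rg_in | apply: rpow_in; exact: Rg_in].
Qed.

Lemma iter_rep i a m P : exists h, List.In h rot_list /\ forall c, cpt c = P ->
  cpt (iter m (qt_cell i a) c) = rapp h P /\ cax (iter m (qt_cell i a) c) = rfwd h (cax c).
Proof.
case: (dec (get P i = a)) => H.
  exists (rpow (Rg i) m); split; first by apply: rpow_in; exact: Rg_in.
  move=> c E; subst P; have [-> ->] := iter_aff m H; by rewrite iter_rot iter_swap.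
exists rid; split; first exact: rid_in.
move=> c E; subst P; rewrite iter_unaff //; by rewrite rapp_id rfwd_id.
Qed.

Lemma qt4 i a c : iter 4 (qt_cell i a) c = c.
Proof.
case: (dec (get (cpt c) i = a)) => H; last exact: iter_unaff.
have [E1 E2] := iter_aff 4 H; apply: cell_ext; [rewrite E1 | rewrite E2].
  by clear; case: i; case: (cpt c) => x y z /=; rewrite !cnegK.
by clear; case: i; case: (cax c).
Qed.

Lemma iter_inj i a m c d : m <= 4 -> iter m (qt_cell i a) c = iter m (qt_cell i a) d -> c = d.
Proof.
move=> Hm E; rewrite -(qt4 i a c) -(qt4 i a d).
have -> : 4 = (4 - m) + m by rewrite subnK.
by rewrite !iterD E.
Qed.

Lemma iter_back i a m c : m <= 4 -> iter (4 - m) (qt_cell i a) (iter m (qt_cell i a) c) = c.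
Proof. move=> Hm; by rewrite -iterD subnK // qt4. Qed.

End Qt.

Section WO.
Variable W : wotype.
Implicit Types (a b v w : W) (s t : option W).

Lemma lt_irr a : ~ wo_lt a a.
Proof.
move: a; apply: (well_founded_ind (@wo_wf W)) => a IH H; exact: (IH a H H).
Qed.

Lemma lt_asym a b : wo_lt a b -> ~ wo_lt b a.
Proof. move=> H1 H2; exact: (lt_irr (wo_trans H1 H2)). Qed.

Lemma stage_wf : well_founded (@stage_lt W).
Proof.
have HS : forall a, Acc (@stage_lt W) (Some a).
  apply: (well_founded_ind (@wo_wf W)) => a IH; apply: Acc_intro => t.
  case: t => [b|] H; [exact: IH | case: H].
case=> [a|]; first exact: HS.
apply: Acc_intro => t; case: t => [b|] H; [exact: HS | case: H].
Qed.

Lemma min_elt (P : W -> Prop) : (exists x, P x) -> exists x, P x /\ forall y, wo_lt y x -> ~ P y.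
Proof.
case=> x; move: x; apply: (well_founded_ind (@wo_wf W)) => x IH Px.
case: (classic (exists y, wo_lt y x /\ P y)) => [[y [H1 H2]]|H]; first exact: IH H1 H2.
exists x; split => // y H1 H2; apply: H; by exists y.
Qed.

Definition below w s := stage_lt (Some w) s.
Definition is_zero s := forall w, ~ below w s.
Definition maxpred s w := below w s /\ forall v, below v s -> ~ wo_lt w v.
Definition is_limit s := (exists w, below w s) /\ forall w, below w s -> exists v, below v s /\ wo_lt w v.

Lemma below_trans v w s : wo_lt v w -> below w s -> below v s.
Proof. case: s => [t|] //=; exact: wo_trans. Qed.

Lemma below_ge v w s : ~ wo_lt v w -> below v s -> below w s.
Proof.
move=> H1 H2; case: (wo_total v w) => [//|[<-//|H]]; exact: below_trans H H2.
Qed.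

Lemma classify s : is_zero s \/ (exists w, maxpred s w) \/ is_limit s.
Proof.
case: (classic (exists w, below w s)) => [Hn|Hz]; last by left => w H; apply: Hz; exists w.
case: (classic (exists w, maxpred s w)) => [Hm|Hm]; first by right; left.
right; right; split => // w Hw.
apply: NNPP => H; apply: Hm; exists w; split => // v Hv Hwv; apply: H; by exists v.
Qed.

Lemma maxpred_uniq s w1 w2 : maxpred s w1 -> maxpred s w2 -> w1 = w2.
Proof.
move=> [H1 M1] [H2 M2]; case: (wo_total w1 w2) => [H|[//|H]].
  by case: (M1 _ H2 H).
by case: (M2 _ H1 H).
Qed.

Lemma limit_not_max s w : is_limit s -> ~ maxpred s w.
Proof. move=> [_ H] [Hw M]; have [v [Hv Hl]] := H w Hw; exact: M v Hv Hl. Qed.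

Lemma zero_not s w : is_zero s -> ~ below w s.
Proof. by move=> H; apply: H. Qed.

Lemma succ_exists w v : wo_lt w v -> exists u, wo_lt w u /\ ~ wo_lt v u /\ maxpred (Some u) w.
Proof.
move=> H; have [u [Hu M]] := min_elt (P := fun u => wo_lt w u) (ex_intro _ v H).
exists u; split => //; split.
  move=> Hvu; exact: M v Hvu H.
split => // v' Hv' Hwv'; exact: M v' Hv' Hwv'.
Qed.

Lemma ge_lt v a b : ~ wo_lt v b -> wo_lt a b -> ~ wo_lt v a.
Proof. move=> H1 H2 H3; apply: H1; exact: wo_trans H3 H2. Qed.

Lemma max2 s b1 b2 : below b1 s -> below b2 s -> exists b, below b s /\
  (forall v, ~ wo_lt v b -> ~ wo_lt v b1) /\ (forall v, ~ wo_lt v b -> ~ wo_lt v b2).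
Proof.
move=> H1 H2; case: (wo_total b1 b2) => [Hlt|[<-|Hlt]].
- exists b2; split => //; split => // v Hv; exact: ge_lt Hv Hlt.
- by exists b1.
- exists b1; split => //; split => // v Hv; exact: ge_lt Hv Hlt.
Qed.

Lemma bound_list (T : Type) s (l : list T) (Q : W -> T -> Prop) :
  (exists w0, below w0 s) ->
  (forall d, List.In d l -> exists b, below b s /\ forall v, below v s -> ~ wo_lt v b -> Q v d) ->
  exists b, below b s /\ forall d, List.In d l -> forall v, below v s -> ~ wo_lt v b -> Q v d.
Proof.
move=> [w0 H0]; elim: l => [|d l IH] H.
  by exists w0; split.
have [b1 [Hb1 Q1]] := H d (or_introl erefl).
have [b2 [Hb2 Q2]] := IH (fun d' Hd' => H d' (or_intror Hd')).
have [b [Hb [M1 M2]]] := max2 Hb1 Hb2.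
exists b; split => // d' [<-|Hd'] v Hv Hvb; [apply: Q1 | apply: Q2] => //; by [apply: M1|apply: M2].
Qed.

Lemma evconst_uniq L X (F : option W -> labelling L X) s c x y :
  evconst F s c x -> evconst F s c y -> x = y.
Proof.
move=> [b1 [H1 E1]] [b2 [H2 E2]].
have [b [Hb [M1 M2]]] := max2 H1 H2.
rewrite -(E1 b Hb (M1 b (@lt_irr b))) (E2 b Hb (M2 b (@lt_irr b))) //.
Qed.

Lemma evconst_ext L X (F G : option W -> labelling L X) s c x :
  (forall v, below v s -> F (Some v) = G (Some v)) -> evconst F s c x -> evconst G s c x.
Proof.
move=> E [b [Hb H]]; exists b; split => // v Hv Hvb; rewrite -E //; exact: H.
Qed.

End WO.

Section Run.
Variables (L : Type) (W : wotype) (X : Type) (sq : W -> btwist L) (f0 : labelling L X).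
Implicit Types (a b v w : W) (s t : option W) (F : option W -> labelling L X).

Lemma run_zero F s : IsRun sq f0 F -> is_zero s -> F s = f0.
Proof. move=> R H; exact: (proj1 (R s)). Qed.

Lemma run_succ F s w : IsRun sq f0 F -> maxpred s w -> F s = act (sq w) (F (Some w)).
Proof. move=> R [H1 H2]; exact: (proj1 (proj2 (R s)) w H1 H2). Qed.

Lemma run_lim F s c x : IsRun sq f0 F -> is_limit s -> evconst F s c x -> F s c = x.
Proof. move=> R [H1 H2] E; exact: (proj1 (proj2 (proj2 (R s)) H1 H2 c) x E). Qed.

Lemma run_lim_some F s c : IsRun sq f0 F -> is_limit s -> F s c <> None -> evconst F s c (F s c).
Proof.
move=> R [H1 H2] Hn.
case: (classic (exists x, evconst F s c x)) => [[x E]|H].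
  by rewrite (proj1 (proj2 (proj2 (R s)) H1 H2 c) x E).
exfalso; apply: Hn; apply: (proj2 (proj2 (proj2 (R s)) H1 H2 c)) => x E; apply: H; by exists x.
Qed.

Definition step s (r : option W -> labelling L X) : labelling L X :=
  match dec (exists w, maxpred s w) with
  | left H => act (sq (proj1_sig (constructive_indefinite_description _ H)))
                  (r (Some (proj1_sig (constructive_indefinite_description _ H))))
  | right _ =>
    match dec (exists w, below w s) with
    | left _ => fun c => match dec (exists x, evconst r s c x) with
                         | left H2 => proj1_sig (constructive_indefinite_description _ H2)
                         | right _ => None end
    | right _ => f0
    end
  end.

Definition totl s (rec : forall t, stage_lt t s -> labelling L X) (t : option W) : labelling L X :=
  match dec (stage_lt t s) with left H => rec t H | right _ => f0 end.

Definition the_run : option W -> labelling L X :=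
  Fix (@stage_wf W) (fun _ => labelling L X) (fun s rec => step s (totl rec)).

Lemma the_run_eq s : the_run s = step s (fun t => match dec (stage_lt t s) with left _ => the_run t | right _ => f0 end).
Proof.
rewrite {1}/the_run Fix_eq.
  reflexivity.
move=> x f g E; congr step; apply: functional_extensionality => t; rewrite /totl.
by case: (dec (stage_lt t x)).
Qed.

Lemma run_exists : IsRun sq f0 the_run.
Proof.
move=> s; set r := (fun t => match dec (stage_lt t s) with left _ => the_run t | right _ => f0 end).
have Er : forall v, below v s -> r (Some v) = the_run (Some v).
  by move=> v Hv; rewrite /r; case: (dec _).
split; [|split].
- move=> Hz; rewrite the_run_eq -/r /step.
  case: (dec (exists w, maxpred s w)) => [H|_].
    by exfalso; case: H => w [Hw _]; case: (Hz w).
  case: (dec (exists w, below w s)) => [H|//].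
  by exfalso; case: H => w Hw; case: (Hz w).
- move=> w Hw Hm; rewrite the_run_eq -/r /step.
  case: (dec (exists w, maxpred s w)) => [H|H]; last by case: H; exists w.
  case: (constructive_indefinite_description _ H) => w' Hw' /=.
  have E : w' = w := maxpred_uniq Hw' (conj Hw Hm).
  by rewrite E Er.
- move=> Hn Hl c; rewrite the_run_eq -/r /step.
  case: (dec (exists w, maxpred s w)) => [H|_].
    by exfalso; case: H => w Hw; case: (limit_not_max (conj Hn Hl) Hw).
  case: (dec (exists w, below w s)) => [_|//].
  case: (dec (exists x, evconst r s c x)) => [H|H].
    case: (constructive_indefinite_description _ H) => x Hx /=.
    split; last by move=> Hno; case: (Hno x); apply: evconst_ext Hx => v Hv; rewrite Er.
    move=> y Hy; apply: (evconst_uniq Hx); apply: evconst_ext Hy => v Hv; by rewrite Er.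
  split=> // x Hx; case: H; exists x; apply: evconst_ext Hx => v Hv; by rewrite Er.
Qed.

End Run.

Section Runs2.
Variables (L : Type) (W : wotype) (sq : W -> btwist L).
Implicit Types (a b v w : W) (s t : option W).

Definition moves (s : btwist L) (c : cell L) := get (cpt c) (bt_axis s) = bt_pos s.

Lemma pow_le4 (s : btwist L) : pow_nat (bt_pow s) <= 4.
Proof. by case: s => ? ? []. Qed.

Lemma act_unmoved X (s : btwist L) (f : labelling L X) c : ~ moves s c -> act s f c = f c.
Proof. move=> H; rewrite /act iter_unaff //. Qed.

Lemma no_move X f0 (G : option W -> labelling L X) s b c : IsRun sq f0 G -> below b s ->
  (forall w, below w s -> ~ wo_lt w b -> ~ moves (sq w) c) ->
  forall v, below v s -> ~ wo_lt v b -> G (Some v) c = G (Some b) c.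
Proof.
move=> R Hb Hm; apply: (well_founded_ind (@wo_wf W)) => v IH Hv Hvb.
case: (wo_total v b) => [//|[->//|Hbv]].
case: (classify (Some v)) => [Hz|[[u Hu]|Hl]].
- by case: (Hz b).
- rewrite (run_succ R Hu).
  have Hus : below u s := below_trans (proj1 Hu) Hv.
  have Hub : ~ wo_lt u b := proj2 Hu b Hbv.
  rewrite act_unmoved; last exact: Hm.
  exact: IH (proj1 Hu) Hus Hub.
- apply: (run_lim R Hl); exists b; split => // v' Hv' Hv'b.
  exact: IH Hv' (below_trans Hv' Hv) Hv'b.
Qed.

Lemma relate X (f0 : labelling L X) F G : IsRun sq f0 F -> IsRun sq (fun c => Some c) G ->
  forall s c d, G s c = Some d -> F s c = f0 d.
Proof.
move=> RF RG; apply: (well_founded_ind (@stage_wf W)) => s IH c d E.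
case: (classify s) => [Hz|[[u Hu]|Hl]].
- move: E; rewrite (run_zero RG Hz) (run_zero RF Hz) => - [->] //.
- move: E; rewrite (run_succ RG Hu) (run_succ RF Hu) /act => E.
  exact: IH (proj1 Hu) _ _ E.
- have Hn : G s c <> None by rewrite E.
  have [b [Hb Hc]] := run_lim_some RG Hl Hn.
  apply: (run_lim RF Hl); exists b; split => // v Hv Hvb.
  apply: IH => //; rewrite (Hc v Hv Hvb); exact: E.
Qed.

Definition Vc (P : pt L) : list (coord L) :=
  [:: px P; py P; pz P; cneg (px P); cneg (py P); cneg (pz P); @PInf L; @NInf L].
Definition good (P : pt L) (d : cell L) :=
  List.In (px (cpt d)) (Vc P) /\ List.In (py (cpt d)) (Vc P) /\ List.In (pz (cpt d)) (Vc P).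

Lemma inV_cneg P (e : coord L) : List.In e (Vc P) -> List.In (cneg e) (Vc P).
Proof.
rewrite /Vc /=; intuition subst; rewrite ?cnegK; simpl; tauto.
Qed.

Lemma goodp_qt P i (a : coord L) p :
  List.In (px p) (Vc P) /\ List.In (py p) (Vc P) /\ List.In (pz p) (Vc P) ->
  List.In (px (qt_pt i a p)) (Vc P) /\ List.In (py (qt_pt i a p)) (Vc P) /\
  List.In (pz (qt_pt i a p)) (Vc P).
Proof.
move=> Hp; rewrite /qt_pt; destruct (dec (get p i = a)) as [Ha|Ha]; last exact: Hp.
move: Hp; case: p Ha => x y z _ /=; case: i => /= [[H1 [H2 H3]]|[H1 [H2 H3]]|[H1 [H2 H3]]];
  repeat split => //; exact: inV_cneg.
Qed.

Lemma good_qt P i (a : coord L) d : good P d -> good P (qt_cell i a d).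
Proof. exact: goodp_qt. Qed.

Lemma good_iter P i (a : coord L) m d : good P d -> good P (iter m (qt_cell i a) d).
Proof. move=> H; elim: m => //= m IH; exact: good_qt. Qed.

Definition cells0 (P : pt L) : list (cell L) :=
  List.flat_map (fun x => List.flat_map (fun y => List.flat_map (fun z =>
    List.flat_map (fun i => match dec (is_inf (get (Pt x y z) i)) with
                            | left H => [:: @Cell L (Pt x y z) i H] | right _ => [::] end)
      [:: AX; AY; AZ]) (Vc P)) (Vc P)) (Vc P).

Lemma cells0_in P d : good P d -> List.In d (cells0 P).
Proof.
case: d => p i H; case: p H => x y z H [Hx [Hy Hz]]; simpl in Hx, Hy, Hz.
have Hi : List.In i [:: AX; AY; AZ] by clear; case: i; simpl; tauto.
rewrite /cells0; apply/List.in_flat_map; exists x; split => //.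
apply/List.in_flat_map; exists y; split => //.
apply/List.in_flat_map; exists z; split => //.
apply/List.in_flat_map; exists i; split; first exact: Hi.
case: (dec _) => [H'|H']; last by case: H'.
left; exact: cell_ext.
Qed.

Lemma cells0_good P d : List.In d (cells0 P) -> good P d.
Proof.
rewrite /cells0 => /List.in_flat_map [x [Hx /List.in_flat_map [y [Hy /List.in_flat_map [z [Hz
  /List.in_flat_map [i [_ H]]]]]]]].
move: H; case: (dec _) => H' //= [<-|//]; by rewrite /good.
Qed.

Definition celldec (x y : cell L) : {x = y} + {x <> y} := dec (x = y).
Definition cl P := List.nodup celldec (cells0 P).

Lemma cl_good P d : List.In d (cl P) <-> good P d.
Proof.
rewrite /cl List.nodup_In; split; [exact: cells0_good | exact: cells0_in].
Qed.

Lemma good_self c : good (cpt c) c.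
Proof. rewrite /good /Vc /=; tauto. Qed.

Definition isNone X (o : option X) := match o with None => true | _ => false end.

Section Persist.
Variables (X : Type) (f0 : labelling L X) (F : option W -> labelling L X).
Hypothesis RF : IsRun sq f0 F.
Variable P : pt L.

Definition Ns s := List.filter (fun d => isNone (F s d)) (cl P).

Lemma Ns_nodup s : List.NoDup (Ns s).
Proof. apply: List.NoDup_filter; exact: List.NoDup_nodup. Qed.

Lemma Ns_in s d : List.In d (Ns s) <-> good P d /\ F s d = None.
Proof.
rewrite /Ns List.filter_In cl_good; split=> [[H1 H2]|[H1 H2]]; split => //.
  by case: (F s d) H2.
by rewrite H2.
Qed.

Lemma Ns_mono : forall t w0, (t = Some w0 \/ below w0 t) ->
  (length (Ns (Some w0)) <= length (Ns t))%coq_nat.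
Proof.
apply: (well_founded_ind (@stage_wf W)) => t IH w0 [->|Hw0]; first by [].
case: (classify t) => [Hz|[[u Hu]|Hl]].
- by case: (Hz w0).
- have Hle : (length (Ns (Some u)) <= length (Ns t))%coq_nat.
    set k := pow_nat (bt_pow (sq u)).
    rewrite -(List.length_map (iter k (qt_cell (bt_axis (sq u)) (bt_pos (sq u))))).
    apply: List.NoDup_incl_length.
      apply: List.NoDup_map_NoDup_ForallPairs; last exact: Ns_nodup.
      move=> x y _ _; apply: iter_inj; exact: pow_le4.
    move=> d /List.in_map_iff [e [<- /Ns_in [He1 He2]]]; apply/Ns_in; split.
      exact: good_iter.
    rewrite (run_succ RF Hu) /act iter_back //; exact: pow_le4.
  have Hw0u : Some u = Some w0 \/ below w0 (Some u).
    case: (wo_total w0 u) => [H|[->|H]]; [by right| by left|].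
    by case: (proj2 Hu w0 Hw0 H).
  exact: PeanoNat.Nat.le_trans (IH _ (proj1 Hu) _ Hw0u) Hle.
- have Hall : forall d, List.In d (cl P) -> exists b, below b t /\
      forall v, below v t -> ~ wo_lt v b -> F t d <> None -> F (Some v) d = F t d.
    move=> d _; case: (classic (F t d = None)) => Hd.
      have [w1 Hw1] := proj1 Hl; exists w1; split => // v _ _ H; by case: H.
    have [b [Hb Hc]] := run_lim_some RF Hl Hd.
    exists b; split => // v Hv Hvb _; exact: Hc.
  have [b [Hb Hc]] := bound_list (l := cl P)
    (Q := fun v d => F t d <> None -> F (Some v) d = F t d) (proj1 Hl) Hall.
  have [e [He [M1 M2]]] := max2 Hb Hw0.
  have Hle : (length (Ns (Some e)) <= length (Ns t))%coq_nat.
    apply: List.NoDup_incl_length; first exact: Ns_nodup.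
    move=> d /Ns_in [Hd1 Hd2]; apply/Ns_in; split => //.
    case: (classic (F t d = None)) => // Hn.
    have Hin : List.In d (cl P) by apply/cl_good.
    by rewrite -(Hc d Hin e He (M1 e (@lt_irr _ e)) Hn).
  have Hw0e : Some e = Some w0 \/ below w0 (Some e).
    have := M2 e (@lt_irr _ e); case: (wo_total w0 e) => [H|[->|H]] H'; [by right|by left|].
    by case: H'.
  exact: PeanoNat.Nat.le_trans (IH _ He _ Hw0e) Hle.
Qed.

End Persist.

Lemma persist X (f0 : labelling L X) F s c : IsRun sq f0 F -> F s c = None ->
  exists d, F None d = None.
Proof.
move=> RF; case: s => [w0|] H; last by exists c.
have Hc : List.In c (Ns F (cpt c) (Some w0)) by apply/Ns_in; split; [exact: good_self|done].
have := Ns_mono RF (cpt c) (t := None) (w0 := w0) (or_intror I).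
case E: (Ns F (cpt c) None) => [|d l].
  by move: Hc; case: (Ns F (cpt c) (Some w0)) => //= ? ? _ /PeanoNat.Nat.nle_succ_0.
move=> _; have : List.In d (Ns F (cpt c) None) by rewrite E; left.
by move/Ns_in => [_ ?]; exists d.
Qed.

End Runs2.

Section Main.
Variable L : Type.

Definition Inv (G : labelling L (cell L)) := forall P : pt L, exists h, List.In h rot_list /\
  forall c, cpt c = P -> exists d, G c = Some d /\ cpt d = rapp h P /\ cax d = rfwd h (cax c).
Definition Inj (G : labelling L (cell L)) := forall c1 c2 d, G c1 = Some d -> G c2 = Some d -> c1 = c2.

Definition solv (j : axis) (x : coord L) : color :=
  match j, x with
  | AX, PInf => red   | AY, PInf => blue  | AZ, PInf => white
  | AX, _    => orange | AY, _   => green | AZ, _    => yellow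
  end.
Lemma solved_solv (d : cell L) : solved d = solv (cax d) (get (cpt d) (cax d)).
Proof. by []. Qed.
Lemma solv_inj j1 j2 x1 x2 : solv j1 x1 = solv j2 x2 -> j1 = j2 /\ (x1 = @PInf L <-> x2 = @PInf L).
Proof.
by case: j1; case: j2; case: x1 => [?|?|||]; case: x2 => [?|?|||] //= _; split.
Qed.

Lemma sig_of (h1 h2 : rt) (Q : pt L) j (d1 d2 : cell L) :
  List.In h1 rot_list -> List.In h2 rot_list -> get Q j = @PInf L ->
  cpt d1 = rapp h1 Q -> cax d1 = rfwd h1 j -> cpt d2 = rapp h2 Q -> cax d2 = rfwd h2 j ->
  solved d1 = solved d2 -> colsig h1 j = colsig h2 j.
Proof.
move=> H1 H2 HQ C1 A1 C2 A2; rewrite !solved_solv C1 A1 C2 A2 !get_rapp !rget_fwd // HQ.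
move/solv_inj => [Ej E]; rewrite /colsig -Ej; congr pair.
move: E; rewrite -Ej; case: (rget h1 (rfwd h1 j)).2; case: (rget h2 (rfwd h1 j)).2 => //= - [Ha Hb].
  first [by have := Ha erefl | by have := Hb erefl].
first [by have := Ha erefl | by have := Hb erefl].
Qed.

Definition nxt (i : axis) := match i with AX => AY | AY => AZ | AZ => AX end.
Definition ringpt (i : axis) (a : coord L) : pt L :=
  match i with AX => Pt a (@PInf L) (@PInf L) | AY => Pt (@PInf L) a (@PInf L) | AZ => Pt (@PInf L) (@PInf L) a end.
Lemma ring_inf1 i a : is_inf (get (ringpt i a) (nxt i)).
Proof. by case: i; left. Qed.
Lemma ring_inf2 i a : is_inf (get (ringpt i a) (nxt (nxt i))).
Proof. by case: i; left. Qed.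
Definition e1 i a : cell L := @Cell L (ringpt i a) (nxt i) (ring_inf1 i a).
Definition e2 i a : cell L := @Cell L (ringpt i a) (nxt (nxt i)) (ring_inf2 i a).
Lemma ring_get i a : get (ringpt i a) i = a.
Proof. by case: i. Qed.
Lemma ring_get1 i a : get (ringpt i a) (nxt i) = @PInf L.
Proof. by case: i. Qed.
Lemma ring_get2 i a : get (ringpt i a) (nxt (nxt i)) = @PInf L.
Proof. by case: i. Qed.
Lemma nxt_neq i : nxt i <> nxt (nxt i).
Proof. by case: i. Qed.

Lemma ring_moves i a (p : pow) : iter (pow_nat p) (Defs.rot i) (ringpt i a) <> ringpt i a.
Proof. by case: i; case: p. Qed.

Definition ringcells i a : list (cell L) :=
  List.flat_map (fun k => [:: iter k (qt_cell i a) (e1 i a); iter k (qt_cell i a) (e2 i a)])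
    [:: 0; 1; 2; 3].
Definition RL (P0 : pt L) := List.flat_map (fun i => ringcells i (get P0 i)) [:: AX; AY; AZ].

Lemma RL_in P0 i x : List.In x (ringcells i (get P0 i)) -> List.In x (RL P0).
Proof.
move=> H; apply/List.in_flat_map; exists i; split => //; case: i {H}; simpl; tauto.
Qed.
Lemma ringcells_in i a (p : pow) :
  List.In (e1 i a) (ringcells i a) /\ List.In (e2 i a) (ringcells i a) /\
  List.In (iter (pow_nat p) (qt_cell i a) (e1 i a)) (ringcells i a) /\
  List.In (iter (pow_nat p) (qt_cell i a) (e2 i a)) (ringcells i a).
Proof. by case: p; rewrite /ringcells /=; tauto. Qed.


Definition cellsAt (P : pt L) : list (cell L) :=
  List.flat_map (fun i => match dec (is_inf (get P i)) with
                          | left H => [:: @Cell L P i H] | right _ => [::] end) [:: AX; AY; AZ].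
Lemma cellsAt_in c : List.In c (cellsAt (cpt c)).
Proof.
apply/List.in_flat_map; exists (cax c); split; first by case: (cax c); simpl; tauto.
case: (dec _) => [H|H]; last by case: H; exact: cinf.
left; exact: cell_ext.
Qed.

Lemma inv_zero : Inv (fun c => Some c) /\ Inj (fun c => Some c).
Proof.
split; last by move=> c1 c2 d [->] [->].
move=> P; exists rid; split; first exact: rid_in.
move=> c Hc; exists c; split => //; by rewrite rapp_id rfwd_id.
Qed.

Lemma inv_succ (t : btwist L) (g : labelling L (cell L)) : Inv g -> Inj g ->
  Inv (act t g) /\ Inj (act t g).
Proof.
case: t => i a p; rewrite /act /= => HI HJ; split.
  move=> P; have [h1 [Hh1 E1]] := iter_rep i a (4 - pow_nat p) P.
  have [h2 [Hh2 E2]] := HI (rapp h1 P).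
  exists (rcomp h2 h1); split; first exact: rcomp_in.
  move=> c Hc; have [C1 A1] := E1 c Hc.
  have [d [Gd [C2 A2]]] := E2 _ C1.
  exists d; split => //; split; first by rewrite C2 rapp_comp.
  by rewrite A2 A1 rfwd_comp.
move=> c1 c2 d H1 H2; apply: (@iter_inj L i a (4 - pow_nat p)); first by rewrite leq_subr.
exact: HJ H1 H2.
Qed.

Section MainRun.
Variables (W : wotype) (sq : W -> btwist L) (F : option W -> labelling L color)
  (G : option W -> labelling L (cell L)).
Hypotheses (RF : IsRun sq (@solved_lab L) F) (RG : IsRun sq (fun c => Some c) G)
  (HF : forall s, legal (F s)).

Lemma FG s c d : G s c = Some d -> F s c = Some (solved d).
Proof. move=> H; exact: (relate RF RG H). Qed.

Lemma inv_lim s : is_limit s -> (forall v, below v s -> Inv (G (Some v)) /\ Inj (G (Some v))) ->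
  (forall c, G s c <> None) -> Inv (G s) /\ Inj (G s).
Proof.
move=> Hl IH HG; split.
  move=> P.
  have Hall : forall d, List.In d (cellsAt P) -> exists b, below b s /\
      forall v, below v s -> ~ wo_lt v b -> G (Some v) d = G s d.
    move=> d _; have [b [Hb Hc]] := run_lim_some RG Hl (HG d); by exists b.
  have [b [Hb Hc]] := bound_list (l := cellsAt P) (Q := fun v d => G (Some v) d = G s d)
    (proj1 Hl) Hall.
  have [h [Hh E]] := (proj1 (IH b Hb)) P.
  exists h; split => // c Hcp.
  rewrite -(Hc c _ b Hb (@lt_irr _ b)); first exact: E.
  by rewrite -Hcp; exact: cellsAt_in.
move=> c1 c2 d H1 H2.
have [b1 [Hb1 E1]] := run_lim_some RG Hl (HG c1).
have [b2 [Hb2 E2]] := run_lim_some RG Hl (HG c2).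
have [b [Hb [M1 M2]]] := max2 Hb1 Hb2.
apply: (proj2 (IH b Hb) c1 c2 d).
  by rewrite (E1 b Hb (M1 b (@lt_irr _ b))).
by rewrite (E2 b Hb (M2 b (@lt_irr _ b))).
Qed.

Lemma lim_legal s : is_limit s -> (forall v, below v s -> Inv (G (Some v)) /\ Inj (G (Some v))) ->
  forall c, G s c <> None.
Proof.
move=> Hl IH c Hc.
have HRL : forall d, List.In d (RL (cpt c)) -> exists b, below b s /\
    forall v, below v s -> ~ wo_lt v b -> F (Some v) d = F s d.
  move=> d _; have Hd : F s d <> None by apply: HF.
  have [b [Hb Hc']] := run_lim_some RF Hl Hd; by exists b.
have [b1 [Hb1 Hconst]] := bound_list (l := RL (cpt c)) (Q := fun v d => F (Some v) d = F s d)
  (proj1 Hl) HRL.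
have [w [Hw [Hwb Hmv]]] : exists w, below w s /\ ~ wo_lt w b1 /\ moves (sq w) c.
  apply: NNPP => Hno.
  have Hnm : forall w, below w s -> ~ wo_lt w b1 -> ~ moves (sq w) c.
    move=> w Hw Hwb Hm; apply: Hno; by exists w.
  have Hcst := no_move RG Hb1 Hnm.
  have E : G s c = G (Some b1) c.
    apply: (run_lim RG Hl); exists b1; split => // v Hv Hvb; exact: Hcst.
  have [h [_ Eh]] := (proj1 (IH b1 Hb1)) (cpt c).
  have [d [Gd _]] := Eh c erefl.
  by move: Hc; rewrite E Gd.
have [v [Hv Hwv]] := proj2 Hl w Hw.
have [u [Hwu [Hvu Hmax]]] := succ_exists Hwv.
have Hu : below u s := below_ge Hvu Hv.
have Hub : ~ wo_lt u b1 by move=> H; apply: Hwb; exact: wo_trans Hwu H.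
have HFu := run_succ RF Hmax.
move: Hmv HFu; case Esq: (sq w) => [i a p] /= Hmv HFu.
rewrite /moves /= in Hmv; subst a.
set a := get (cpt c) i.
have [M1 [M2 [M3 M4]]] := ringcells_in i a p.
set T := iter (pow_nat p) (qt_cell i a).
have Hkey : forall e, List.In e (ringcells i a) -> List.In (T e) (ringcells i a) ->
    F (Some w) e = F (Some w) (T e).
  move=> e He HTe.
  have He' := RL_in He; have HTe' := RL_in HTe.
  rewrite (Hconst e He' w Hw Hwb) (Hconst (T e) HTe' w Hw Hwb).
  rewrite -(Hconst (T e) HTe' u Hu Hub) HFu /act /= /T iter_back.
    by rewrite (Hconst e He' w Hw Hwb).
  by case: (p).
have K1 := Hkey (e1 i a) M1 M3; have K2 := Hkey (e2 i a) M2 M4.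
set P := ringpt i a.
have [h1 [Hh1 Eh1]] := (proj1 (IH w Hw)) P.
have [hk [Hhk Ehk]] := iter_rep i a (pow_nat p) P.
have [h' [Hh' Eh']] := (proj1 (IH w Hw)) (rapp hk P).
have [C1 A1] := Ehk (e1 i a) erefl.
have [C2 A2] := Ehk (e2 i a) erefl.
have [d1 [G1 [D1c D1a]]] := Eh1 (e1 i a) erefl.
have [d1' [G1' [D1c' D1a']]] := Eh1 (e2 i a) erefl.
have [d2 [G2 [D2c D2a]]] := Eh' (T (e1 i a)) C1.
have [d2' [G2' [D2c' D2a']]] := Eh' (T (e2 i a)) C2.
have S1 : solved d1 = solved d2 by move: K1; rewrite (FG G1) (FG G2) => - [].
have S2 : solved d1' = solved d2' by move: K2; rewrite (FG G1') (FG G2') => - [].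
have Hc2 : List.In (rcomp h' hk) rot_list := rcomp_in Hh' Hhk.
have Sig1 : colsig h1 (nxt i) = colsig (rcomp h' hk) (nxt i).
  apply: (sig_of Hh1 Hc2 (ring_get1 i a) D1c D1a _ _ S1).
    by rewrite D2c rapp_comp.
  by rewrite D2a A1 rfwd_comp.
have Sig2 : colsig h1 (nxt (nxt i)) = colsig (rcomp h' hk) (nxt (nxt i)).
  apply: (sig_of Hh1 Hc2 (ring_get2 i a) D1c' D1a' _ _ S2).
    by rewrite D2c' rapp_comp.
  by rewrite D2a' A2 rfwd_comp.
have Eh := key_rot Hh1 Hc2 (nxt_neq (i:=i)) Sig1 Sig2.
have Ed : d1 = d2.
  apply: cell_ext; first by rewrite D1c D2c -rapp_comp -Eh.
  by rewrite D1a D2a A1 -rfwd_comp // -Eh.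
rewrite -Ed in G2.
have Ee := proj2 (IH w Hw) _ _ _ G1 G2.
have [Ec _] := iter_aff (pow_nat p) (ring_get i a) (c := e1 i a).
have H := f_equal (@cpt L) Ee; rewrite /T Ec in H.
change (cpt (e1 i a)) with (ringpt i a) in H.
by apply: (ring_moves (i:=i) (a:=a) (p:=p)); rewrite -H.
Qed.

Theorem main_inv : forall s, Inv (G s) /\ Inj (G s).
Proof.
apply: (well_founded_ind (@stage_wf W)) => s IH.
case: (classify s) => [Hz|[[u Hu]|Hl]].
- rewrite (run_zero RG Hz); exact: inv_zero.
- rewrite (run_succ RG Hu); have [H1 H2] := IH _ (proj1 Hu); exact: inv_succ.
- have IH' : forall v, below v s -> Inv (G (Some v)) /\ Inj (G (Some v)).
    move=> v Hv; exact: IH.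
  exact: inv_lim Hl IH' (lim_legal Hl IH').
Qed.

End MainRun.
End Main.

Section P1.
Variable L : Type.

Lemma part1 (W : wotype) (sq : W -> btwist L) :
  convergent sq (@solved_lab L) <-> univ_convergent sq.
Proof.
split.
  move=> [F [RF HFl]].
  have HF : forall s, legal (F s).
    move=> s c Hc; have [d Hd] := persist RF Hc; exact: HFl d Hd.
  have RG := run_exists sq (fun c : cell L => Some c).
  exists (the_run sq (fun c => Some c)); split => // c.
  have [h [_ Eh]] := proj1 (main_inv RF RG HF None) (cpt c).
  by have [d [-> _]] := Eh c erefl.
move=> [G [RG HG]].
have RF := run_exists sq (@solved_lab L).
exists (the_run sq (@solved_lab L)); split => // c.
case E: (G None c) => [d|]; last by case: (HG c).
by rewrite (relate RF RG E).
Qed.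

End P1.

Section Sum.
Variables W1 W2 : wotype.

Definition sum_lt (x y : W1 + W2) : Prop :=
  match x, y with
  | inl a, inl b => wo_lt a b | inl _, inr _ => True
  | inr _, inl _ => False | inr a, inr b => wo_lt a b end.

Lemma sum_trans a b c : sum_lt a b -> sum_lt b c -> sum_lt a c.
Proof. case: a => a; case: b => b; case: c => c //=; exact: wo_trans. Qed.

Lemma sum_total a b : sum_lt a b \/ a = b \/ sum_lt b a.
Proof.
case: a => a; case: b => b /=.
- by case: (wo_total a b) => [H|[->|H]]; [left|right; left|right; right].
- by left.
- by right; right.
- by case: (wo_total a b) => [H|[->|H]]; [left|right; left|right; right].
Qed.

Lemma sum_wf : well_founded sum_lt.
Proof.
have H1 : forall a, Acc sum_lt (inl a).
  apply: (well_founded_ind (@wo_wf W1)) => a IH; apply: Acc_intro => y.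
  case: y => y H; [exact: IH | case: H].
have H2 : forall b, Acc sum_lt (inr b).
  apply: (well_founded_ind (@wo_wf W2)) => b IH; apply: Acc_intro => y.
  case: y => y H; [exact: H1 | exact: IH].
by case.
Qed.

Definition wsum : wotype := WO sum_trans sum_total sum_wf.

End Sum.

Definition wempty : wotype.
Proof.
refine (@WO Empty_set (fun _ _ => False) _ _ _).
- by [].
- by case.
- by case.
Defined.

Section SumRun.
Variables (L : Type) (X : Type) (W1 W2 : wotype) (sq1 : W1 -> btwist L) (sq2 : W2 -> btwist L).
Variables (f0 : labelling L X) (R1 : option W1 -> labelling L X) (R2 : option W2 -> labelling L X).
Hypotheses (H1 : IsRun sq1 f0 R1) (H2 : IsRun sq2 (R1 None) R2).

Definition sqsum (x : wsum W1 W2) : btwist L :=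
  match x with inl a => sq1 a | inr b => sq2 b end.
Definition Gsum (s : option (wsum W1 W2)) : labelling L X :=
  match s with Some (inl a) => R1 (Some a) | Some (inr b) => R2 (Some b) | None => R2 None end.

Lemma mkRun (W : wotype) (sq : W -> btwist L) (g0 : labelling L X) (F : option W -> labelling L X) :
  (forall s, is_zero s -> F s = g0) ->
  (forall s w, maxpred s w -> F s = act (sq w) (F (Some w))) ->
  (forall s, is_limit s -> forall c, (forall x, evconst F s c x -> F s c = x) /\
                                ((forall x, ~ evconst F s c x) -> F s c = None)) ->
  IsRun sq g0 F.
Proof.
move=> Z S Lm s; split; first exact: Z.
split; first by move=> w Hw Hm; apply: S.
move=> Hn Hl; exact: Lm s (conj Hn Hl).
Qed.

Definition lift2 (t : option W2) : option (wsum W1 W2) :=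
  match t with Some b => Some (inr b) | None => None end.

Lemma below_l (a : W1) (s : option (wsum W1 W2)) :
  below (inl a : wsum W1 W2) s <-> match s with Some (inl a') => wo_lt a a' | _ => True end.
Proof. by case: s => [[a'|b']|]. Qed.

Lemma below_r2 (b : W2) (t : option W2) : below (inr b : wsum W1 W2) (lift2 t) <-> below b t.
Proof. by case: t. Qed.
Lemma below_l2 (a : W1) (t : option W2) : below (inl a : wsum W1 W2) (lift2 t).
Proof. by case: t. Qed.

Lemma run_lim_none (W : wotype) (sq : W -> btwist L) (g0 : labelling L X) (F : option W -> labelling L X) s c :
  IsRun sq g0 F -> is_limit s -> (forall x, ~ evconst F s c x) -> F s c = None.
Proof. move=> R [Hn Hl] H; exact: (proj2 (proj2 (proj2 (R s)) Hn Hl c) H). Qed.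

Local Notation S := (wsum W1 W2).

Lemma G2 t : Gsum (lift2 t) = R2 t.
Proof. by case: t. Qed.

Lemma zero2 t : is_zero (lift2 t) -> Gsum (lift2 t) = f0.
Proof.
move=> Hz; rewrite G2 (run_zero H2 (s := t)); last by move=> y Hy; apply: (Hz (inr y)); apply/below_r2.
apply: (run_zero H1) => x _; exact: (Hz (inl x) (below_l2 x t)).
Qed.

Lemma succ2 t (w : S) : maxpred (lift2 t) w -> Gsum (lift2 t) = act (sqsum w) (Gsum (Some w)).
Proof.
rewrite G2; case: w => [x|y] [Hw Hm] /=.
  have Hz : is_zero t.
    move=> y Hy; apply: (Hm (inr y)); [by apply/below_r2 | by []].
  rewrite (run_zero H2 Hz); apply: (run_succ H1); split => // v _; exact: (Hm (inl v) (below_l2 v t)).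
apply: (run_succ H2); split; first by apply/below_r2.
move=> v Hv; apply: (Hm (inr v)); by apply/below_r2.
Qed.

Lemma lim2 t : is_limit (lift2 t) -> forall c,
  (forall x, evconst Gsum (lift2 t) c x -> Gsum (lift2 t) c = x) /\
  ((forall x, ~ evconst Gsum (lift2 t) c x) -> Gsum (lift2 t) c = None).
Proof.
move=> [[w0 Hw0] Hl] c; rewrite G2.
case: (classic (exists y, below y t)) => [[y0 Hy0]|Hno].
  have Hlt : is_limit t.
    split; first by exists y0.
    move=> y Hy; have [v [Hv Hyv]] := Hl (inr y) (proj2 (below_r2 y t) Hy).
    case: v Hv Hyv => [x|y'] Hv Hyv //; exists y'; split => //; exact: (proj1 (below_r2 y' t) Hv).
  have E1 : forall x, evconst Gsum (lift2 t) c x -> evconst R2 t c x.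
    move=> x [[a|b] [Hb Hc]].
      exists y0; split => // v Hv _.
      exact: (Hc (inr v) (proj2 (below_r2 v t) Hv) (fun H : False => H)).
    exists b; split; first exact: (proj1 (below_r2 b t) Hb).
    move=> v Hv Hvb; exact: (Hc (inr v) (proj2 (below_r2 v t) Hv) Hvb).
  have E2 : forall x, evconst R2 t c x -> evconst Gsum (lift2 t) c x.
    move=> x [b [Hb Hc]]; exists (inr b); split; first exact: (proj2 (below_r2 b t) Hb).
    case=> [a|v] Hv Hvb; first by case: Hvb.
    exact: (Hc v (proj1 (below_r2 v t) Hv) Hvb).
  split.
    move=> x Hx; exact: (run_lim H2 Hlt (E1 x Hx)).
  move=> Hn; apply: (run_lim_none H2 Hlt) => x Hx; exact: (Hn x (E2 x Hx)).
have Hz : is_zero t by move=> y Hy; apply: Hno; exists y.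
rewrite (run_zero H2 Hz).
have Hlt : is_limit (None : option W1).
  split.
    case: w0 Hw0 => [x|y] Hw0; first by exists x.
    by case: Hno; exists y; exact: (proj1 (below_r2 y t) Hw0).
  move=> x _; have [v [Hv Hxv]] := Hl (inl x) (below_l2 x t).
  case: v Hv Hxv => [x'|y] Hv Hxv; first by exists x'.
  by case: Hno; exists y; exact: (proj1 (below_r2 y t) Hv).
have E1 : forall x, evconst Gsum (lift2 t) c x -> evconst R1 None c x.
  move=> x [[a|b] [Hb Hc]].
    exists a; split => // v _ Hva; rewrite -(Hc (inl v) (below_l2 v t) Hva) //.
  by case: Hno; exists b; exact: (proj1 (below_r2 b t) Hb).
have E2 : forall x, evconst R1 None c x -> evconst Gsum (lift2 t) c x.
  move=> x [b [_ Hc]]; exists (inl b); split; first exact: below_l2.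
  case=> [a|v] Hv Hvb; first exact: Hc.
  by case: Hno; exists v; exact: (proj1 (below_r2 v t) Hv).
split.
  move=> x Hx; exact: (run_lim H1 Hlt (E1 x Hx)).
move=> Hn; apply: (run_lim_none H1 Hlt) => x Hx; exact: (Hn x (E2 x Hx)).
Qed.

Lemma run_sum : IsRun sqsum f0 Gsum.
Proof.
apply: mkRun.
- case=> [[a|b]|] Hz.
  + apply: (run_zero H1) => w Hw; exact: (Hz (inl w)).
  + exact: (zero2 (t := Some b)).
  + exact: (zero2 (t := None)).
- case=> [[a|b]|] w Hm.
  + case: w Hm => [x|y] [Hw Hm]; last by case: Hw.
    apply: (run_succ H1); split => // v Hv; exact: (Hm (inl v)).
  + exact: (succ2 (t := Some b)).
  + exact: (succ2 (t := None)).
- case=> [[a|b]|] Hl c.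
  + have Hlt : is_limit (Some a).
      split; first by case: (proj1 Hl) => [[x|y] Hx]; [exists x|case: Hx].
      move=> x Hx; have [[v|v] [Hv Hxv]] := proj2 Hl (inl x) Hx; first by exists v.
      by case: Hv.
    have E1 : forall x, evconst Gsum (Some (inl a)) c x -> evconst R1 (Some a) c x.
      move=> x [[b|b] [Hb Hc]]; last by case: Hb.
      exists b; split => // v Hv Hvb; exact: (Hc (inl v)).
    have E2 : forall x, evconst R1 (Some a) c x -> evconst Gsum (Some (inl a)) c x.
      move=> x [b [Hb Hc]]; exists (inl b); split => //.
      case=> [v|v] Hv Hvb; [exact: Hc | by case: Hv].
    split.
      move=> x Hx; exact: (run_lim H1 Hlt (E1 x Hx)).
    move=> Hn; apply: (run_lim_none H1 Hlt) => x Hx; exact: (Hn x (E2 x Hx)).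
  + exact: (lim2 (t := Some b)).
  + exact: (lim2 (t := None)).
Qed.

End SumRun.

Lemma kS24_gt0 : 0 < kS24.
Proof.
rewrite /kS24; apply: (big_ind (fun x => 0 < x)) => //.
by move=> x y Hx Hy; rewrite lcmn_gt0 Hx Hy.
Qed.

Section Cyc.
Variable d : nat.
Hypotheses (Hd0 : 0 < d) (Hd : d <= 24).

Definition fc (i : 'I_24) : 'I_24 := if i < d then inord (i.+1 %% d) else i.

Lemma fc_val (i : 'I_24) : i < d -> (fc i : nat) = i.+1 %% d.
Proof.
move=> H; rewrite /fc H inordK //; apply: leq_trans Hd; exact: ltn_pmod.
Qed.

Lemma fc_inj : injective fc.
Proof.
move=> i j E.
case Hi: (i < d); case Hj: (j < d).
- apply: val_inj; have := congr1 (@nat_of_ord 24) E; rewrite !fc_val // => E'.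
  have E2 : (i + 1) %% d == (j + 1) %% d by rewrite !addn1 E'.
  by move: E2; rewrite eqn_modDr !modn_small // => /eqP.
- move: E; rewrite /fc Hi Hj => E; have := congr1 (@nat_of_ord 24) E; rewrite inordK.
    move=> E'; have : j < d by rewrite -E' ltn_pmod.
    by rewrite Hj.
  apply: leq_trans Hd; exact: ltn_pmod.
- move: E; rewrite /fc Hi Hj => E; have := congr1 (@nat_of_ord 24) E; rewrite inordK.
    move=> E'; have : i < d by rewrite E' ltn_pmod.
    by rewrite Hi.
  apply: leq_trans Hd; exact: ltn_pmod.
- by move: E; rewrite /fc Hi Hj.
Qed.

Definition cyc : 'S_24 := perm fc_inj.

Lemma cyc_iter n : (iter n cyc ord0 : nat) = n %% d.
Proof.
elim: n => [|n IH]; first by rewrite mod0n.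
rewrite iterS permE fc_val IH ?ltn_pmod //.
by rewrite -addn1 modnDml addn1.
Qed.

Lemma dvd_kS24 : d %| kS24.
Proof.
apply: dvdn_trans (_ : #[cyc]%g %| kS24).
  have := cyc_iter #[cyc]%g; rewrite -permX expg_order perm1 /= => H.
  by rewrite /dvdn -H.
by apply: (biglcmn_sup cyc).
Qed.
End Cyc.

Section P2.
Variables (L : Type) (W : wotype) (sq : W -> btwist L) (f : cell L -> color).
Variables (F : option W -> labelling L color).
Hypotheses (RF : IsRun sq (@solved_lab L) F) (EF : F None = (fun c => Some (f c))).

Let G := the_run sq (fun c : cell L => Some c).
Let RG : IsRun sq (fun c => Some c) G := run_exists sq (fun c : cell L => Some c).

Lemma HF : forall s, legal (F s).
Proof.
move=> s c Hc; have [d Hd] := persist RF Hc; by move: Hd; rewrite EF.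
Qed.

Let INV := main_inv RF RG HF None.

Definition pi (c : cell L) : cell L := match G None c with Some d => d | None => c end.

Lemma Gpi c : G None c = Some (pi c).
Proof.
have [h [_ Eh]] := proj1 INV (cpt c); have [d [Gd _]] := Eh c erefl.
by rewrite /pi Gd.
Qed.

Lemma pi_inj c1 c2 : pi c1 = pi c2 -> c1 = c2.
Proof. move=> E; apply: (proj2 INV c1 c2 (pi c2)); by rewrite Gpi ?E. Qed.

Lemma pi_rep n c : exists h, List.In h rot_list /\
  cpt (iter n pi c) = rapp h (cpt c) /\ cax (iter n pi c) = rfwd h (cax c).
Proof.
elim: n => [|n [h [Hh [C A]]]].
  by exists rid; split; [exact: rid_in | rewrite /= rapp_id rfwd_id].
have [h' [Hh' Eh']] := proj1 INV (cpt (iter n pi c)).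
have [d [Gd [C' A']]] := Eh' (iter n pi c) erefl.
exists (rcomp h' h); split; first exact: rcomp_in.
rewrite iterS /pi Gd C' A' C A rapp_comp rfwd_comp //.
Qed.

Lemma iter_pi_inj n x y : iter n pi x = iter n pi y -> x = y.
Proof. elim: n => //= n IH E; apply: IH; exact: pi_inj. Qed.

Lemma pi_cycle c : exists d, 0 < d <= 24 /\ iter d pi c = c.
Proof.
pose Q n h := List.In h rot_list /\ cpt (iter n pi c) = rapp h (cpt c) /\
   cax (iter n pi c) = rfwd h (cax c).
pose hs n := epsilon (inhabits rid) (Q n).
have Hs : forall n, Q n (hs n).
  move=> n; apply: epsilon_spec; exact: pi_rep.
pose l := List.map hs (List.seq 0 25).
have Hl : length l = 25 by rewrite /l List.length_map List.length_seq.
have Hincl : List.incl l rot_list.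
  move=> h /List.in_map_iff [n [<- _]]; exact: (proj1 (Hs n)).
have HnD : ~ List.NoDup l.
  move=> HD; have := List.NoDup_incl_length HD Hincl; rewrite Hl rot_list_len; lia.
have [i [j [Hi [Hj [Eij Hij]]]]] : exists i j, (i < 25)%coq_nat /\ (j < 25)%coq_nat /\
    hs i = hs j /\ i <> j.
  apply: NNPP => H; apply: HnD; apply/(List.NoDup_nth l (hs 0)) => i j Hi Hj E.
  apply: NNPP => Hne; apply: H; exists i, j; split; first by rewrite -Hl.
  split; first by rewrite -Hl.
  split => //; rewrite Hl in Hi Hj; move: E; rewrite /l !List.map_nth !List.seq_nth //.
have Eit : iter i pi c = iter j pi c.
  have [_ [C1 A1]] := Hs i; have [_ [C2 A2]] := Hs j.
  by apply: cell_ext; rewrite ?C1 ?C2 ?A1 ?A2 Eij.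
wlog Hlt : i j Hi Hj Eij Hij Eit / (i < j)%coq_nat.
  move=> Hw; case: (PeanoNat.Nat.lt_total i j) => [H|[H|H]]; first exact: (Hw i j).
    by case: Hij.
  exact: (Hw j i Hj Hi (esym Eij) (fun E => Hij (esym E)) (esym Eit) H).
exists (j - i); split.
  apply/andP; split; first by rewrite subn_gt0; apply/ltP.
  apply: leq_trans (leq_subr _ _) _; by apply/leP; lia.
apply: (iter_pi_inj (n := i)); rewrite -iterD subnKC ?Eit //; apply/leP; lia.
Qed.

Lemma pi_k c : iter kS24 pi c = c.
Proof.
have [d [/andP [Hd0 Hd24] Hc]] := pi_cycle c.
rewrite -(divnK (dvd_kS24 Hd0 Hd24)).
elim: (kS24 %/ d) => [//|q IH].
by rewrite mulSn iterD IH Hc.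
Qed.

Lemma f_pi c : f c = solved (pi c).
Proof.
have := relate RF RG (Gpi c); rewrite EF => - [->] //.
Qed.

End P2.

Section Rep.
Variables (L : Type) (W : wotype) (sq : W -> btwist L).

Fixpoint wrep (n : nat) : wotype :=
  match n with 0 => wempty | S n => wsum (wrep n) W end.

Fixpoint sqrep (n : nat) : wrep n -> btwist L :=
  match n return wrep n -> btwist L with
  | 0 => fun e => match e with end
  | S n => fun x => sqsum (@sqrep n) sq x
  end.

Fixpoint grep (n : nat) : wrep n -> nat * W :=
  match n return wrep n -> nat * W with
  | 0 => fun e => match e with end
  | S n => fun x => match x with inl a => @grep n a | inr b => (n, b) end
  end.

Lemma grep_lt n a : (@grep n a).1 < n.
Proof.
elim: n a => [[]|n IH [a|b]] //=; exact: leq_trans (IH a) (leqnSn n).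
Qed.

Lemma len_rep n : len_le_mul (wrep n) W n.
Proof.
exists (@grep n); split; first exact: grep_lt.
elim: n => [[]|n IH] [a|a] [b|b] //= H.
- exact: IH.
- by left; exact: grep_lt.
- by right.
Qed.

Lemma run_empty X (g0 : labelling L X) : IsRun (@sqrep 0) g0 (fun _ => g0).
Proof.
apply: mkRun => //; try by move=> s [[w _]]; case: (w : Empty_set).
Qed.

End Rep.

Section P3.
Variables (L : Type) (W : wotype) (sq : W -> btwist L) (f : cell L -> color).
Variables (F : option W -> labelling L color).
Hypotheses (RF : IsRun sq (@solved_lab L) F) (EF : F None = (fun c => Some (f c))).

Lemma run_phi (psi : cell L -> color) : exists R, IsRun sq (fun c => Some (psi c)) R /\
  R None = (fun c => Some (psi (pi sq c))).
Proof.
exists (the_run sq (fun c => Some (psi c))); split; first exact: run_exists.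
apply: functional_extensionality => c.
exact: (relate (run_exists sq (fun c => Some (psi c))) (run_exists sq (fun c : cell L => Some c))
         (Gpi RF EF c)).
Qed.

Lemma rep_run n (phi : cell L -> color) : exists R, IsRun (@sqrep L W sq n) (fun c => Some (phi c)) R /\
  R None = (fun c => Some (phi (iter n (pi sq) c))).
Proof.
elim: n => [|n [R1 [H1 E1]]].
  exists (fun _ => fun c => Some (phi c)); split => //; exact: run_empty.
have [R2 [H2 E2]] := run_phi (fun c => phi (iter n (pi sq) c)).
rewrite -E1 in H2.
exists (Gsum R1 R2); split; first exact: run_sum H1 H2.
rewrite /= E2; apply: functional_extensionality => c /=; by rewrite -iterS -iterSr.
Qed.

End P3.

Theorem theorem4p3 (L : Type) (HL : infinite_type L) :
  (forall (W : wotype) (sq : W -> btwist L),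
      convergent sq (@solved_lab L) <-> univ_convergent sq) /\
  (forall (W : wotype) (sq : W -> btwist L) (f : cell L -> color),
      reaches sq (@solved_lab L) (fun c => Some (f c)) ->
      exists (W' : wotype) (sq' : W' -> btwist L),
        len_le_mul W' W (kS24 - 1) /\
        reaches sq' (fun c => Some (f c)) (@solved_lab L)).
Proof.
split; first by move=> W sq; exact: part1.
move=> W sq f [F [RF EF]].
exists (wrep W (kS24 - 1)), (@sqrep L W sq (kS24 - 1)); split; first exact: len_rep.
have [R [RR ER]] := rep_run RF EF (kS24 - 1) f.
exists R; split => //; rewrite ER; apply: functional_extensionality => c.
rewrite (f_pi RF EF) -iterS subn1 prednK; last exact: kS24_gt0.
by rewrite (pi_k RF EF).
Qed.
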